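(* Let $k\geqslant 3$ and $\Delta\geqslant 3$ be integers, let $G$ be a finite, simple, connected graph of maximum degree $\Delta$, and let $s$ be a nonnegative integer with $s\leqslant \frac{k-5}{12}$. If $g_k(G)<f(s,\Delta)+1$, then $G$ has diameter at most $k+2s$.
   Context: For integers $m\geqslant 0$ and $\Delta$, let $f(m,\Delta)=\Delta\sum_{i=0}^{m-1}(\Delta-1)^i$ (so $f(0,\Delta)=0$). For a graph $G$, its $k$-th power $G^k$ is the graph on $V(G)$ in which two distinct vertices are adjacent iff their distance in $G$ is at most $k$. $\chi$ denotes the chromatic number and $\Delta(G)$ the maximum degree of $G$. The $k$-gap of $G$ is $g_k(G)=f(k,\Delta(G))+1-\chi(G^k)$. *)

(* Defs.v *)
From mathcomp Require Import all_boot all_order all_algebra.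
Set Implicit Arguments. Unset Strict Implicit. Unset Printing Implicit Defensive.

(* Simple graphs: a symmetric irreflexive relation e on a finType T. *)

Definition fmd (m D : nat) : nat := D * \sum_(i < m) (D - 1) ^ i.

Definition deg (T : finType) (e : rel T) (x : T) : nat := #|[set y | e x y]|.
Definition maxdeg (T : finType) (e : rel T) : nat := \max_(x : T) deg e x.

Fixpoint within (T : finType) (e : rel T) (n : nat) (x y : T) : bool :=
  match n with
  | 0 => x == y
  | n'.+1 => within e n' x y || [exists z, within e n' x z && e z y]
  end.

(* graph distance; for connected graphs it is the least n with a walk of
   length n (always < #|T|); for unreachable pairs it defaults to #|T|. *)
Definition dist (T : finType) (e : rel T) (x y : T) : nat :=
  find (fun n => within e n x y) (iota 0 #|T|).

Definition diameter (T : finType) (e : rel T) : nat :=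
  \max_(x : T) \max_(y : T) dist e x y.

Definition powrel (T : finType) (e : rel T) (k : nat) : rel T :=
  fun x y => (x != y) && within e k x y.

Definition colorable (T : finType) (r : rel T) (c : nat) : bool :=
  [exists f : {ffun T -> 'I_c},
     [forall x, forall y, ((x != y) && r x y) ==> (f x != f y)]].

Lemma colorable_card (T : finType) (r : rel T) : exists c, colorable r c.
Proof.
exists #|T|; apply/existsP; exists [ffun x => enum_rank x].
apply/forallP => x; apply/forallP => y; apply/implyP => /andP [Hxy _].
by rewrite !ffunE; apply: contra Hxy => /eqP /enum_rank_inj ->.
Qed.

Definition chi (T : finType) (r : rel T) : nat := ex_minn (colorable_card r).

Definition kgap (T : finType) (e : rel T) (k : nat) : int :=
  (fmd k (maxdeg e) + 1)%:Z - (chi (powrel e k))%:Z.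

(* Main.v *)
Require Import Defs.
From mathcomp Require Import all_boot all_order all_algebra zify.
Set Implicit Arguments. Unset Strict Implicit. Unset Printing Implicit Defensive.

Lemma card_bigcup_leq (T I : finType) (P : pred I) (F : I -> {set T}) :
  #|\bigcup_(i | P i) F i| <= \sum_(i | P i) #|F i|.
Proof.
elim/big_rec2: _ => [|i n S _ h]; first by rewrite cards0.
by apply: leq_trans (leq_card_setU _ _) _; rewrite leq_add2l.
Qed.

Section Dist.
Variables (T : finType) (e : rel T).
Hypothesis esym : symmetric e.
Hypothesis econn : forall x y, connect e x y.

Lemma within_mono n m x y : n <= m -> within e n x y -> within e m x y.
Proof.
move=> /subnKC <-; elim: (m - n) => [|i IH]; first by rewrite addn0.
by move=> h; rewrite addnS /= (IH h).
Qed.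

Lemma within_S n x y :
  within e n.+1 x y = within e n x y || [exists z, within e n x z && e z y].
Proof. by []. Qed.

Lemma within_step_l n x x1 y : e x x1 -> within e n x1 y -> within e n.+1 x y.
Proof.
move=> hx; elim: n y => [|n IH] y.
  by move/eqP=> <-; rewrite within_S; apply/orP; right; apply/existsP; exists x; rewrite /= eqxx hx.
rewrite within_S; case/orP=> [h|/existsP [z /andP [hz hzy]]].
  by rewrite within_S (IH _ h).
by rewrite within_S; apply/orP; right; apply/existsP; exists z; rewrite IH.
Qed.

Lemma within_trans m n x y z : within e m x y -> within e n y z -> within e (m + n) x z.
Proof.
move=> hxy; elim: n z => [|n IH] z /=; first by move/eqP <-; rewrite addn0.
case/orP=> [h|/existsP [w /andP [hw hwz]]].
  by rewrite addnS /= IH.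
by rewrite addnS /=; apply/orP; right; apply/existsP; exists w; rewrite IH.
Qed.

Lemma within_sym n x y : within e n x y -> within e n y x.
Proof.
elim: n x y => [|n IH] x y /=; first by rewrite eq_sym.
case/orP=> [h|/existsP [z /andP [hz hzy]]]; first by rewrite IH.
apply: (within_step_l (x1 := z)); first by rewrite esym.
exact: IH.
Qed.

Lemma within_path x p : path e x p -> within e (size p) x (last x p).
Proof.
elim: p x => [|y p IH] x /=; first by [].
case/andP=> hxy hp; apply: within_step_l hxy _; exact: IH.
Qed.

Lemma within_ex x y : exists2 n, n < #|T| & within e n x y.
Proof.
case/connectP: (econn x y) => p hp ->.
case: (shortenP hp) => p' hp' hu _.
exists (size p'); last exact: within_path.
have hc := card_uniqP hu.
have : size (x :: p') <= #|T| by rewrite -hc max_card.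
by [].
Qed.

Lemma withinE n x y : within e n x y = (dist e x y <= n).
Proof.
rewrite /dist.
have hex : has (fun n => within e n x y) (iota 0 #|T|).
  case: (within_ex x y) => n0 hn0 hw; apply/hasP; exists n0 => //.
  by rewrite mem_iota.
have hlt := hex; rewrite has_find size_iota in hlt.
have hf := nth_find 0 hex; rewrite nth_iota // add0n in hf.
apply/idP/idP => h.
  rewrite leqNgt; apply/negP => hlt2.
  have := before_find 0 hlt2; rewrite nth_iota ?add0n ?h //.
  exact: ltn_trans hlt2 hlt.
exact: within_mono h hf.
Qed.

Local Notation d := (dist e).

Lemma d_refl x : d x x = 0.
Proof. by apply/eqP; rewrite -leqn0 -withinE /=. Qed.

Lemma d_eq0 x y : d x y = 0 -> x = y.
Proof. by move=> h; have := leqnn 0; rewrite -{1}h -withinE => /eqP. Qed.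

Lemma d_sym x y : d x y = d y x.
Proof.
have h : forall a b, d a b <= d b a.
  by move=> a b; rewrite -withinE; apply: within_sym; rewrite withinE.
by apply/eqP; rewrite eqn_leq !h.
Qed.

Lemma d_tri x y z : d x z <= d x y + d y z.
Proof. by rewrite -withinE; apply: within_trans; rewrite withinE. Qed.

Lemma d_edge x y : e x y -> d x y <= 1.
Proof.
move=> h; rewrite -withinE /=; apply/orP; right; apply/existsP; exists x.
by rewrite eqxx h.
Qed.

Lemma d_step x y j : d x y = j.+1 -> exists2 c, e x c & d c y = j.
Proof.
move=> h; have : within e j.+1 y x by rewrite withinE d_sym h.
rewrite /=; case/orP=> [|/existsP [z /andP [hz hzx]]].
  by rewrite withinE d_sym h ltnn.
exists z; first by rewrite esym.
apply/eqP; rewrite eqn_leq; apply/andP; split.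
  by rewrite d_sym -withinE.
have := d_tri x z y; rewrite h d_sym.
have := d_edge hzx; rewrite d_sym; lia.
Qed.

Lemma d_geo x y j : j <= d x y -> exists z, d x z = j /\ d z y = d x y - j.
Proof.
elim: j => [|j IH] hj; first by exists x; rewrite d_refl subn0.
case: (IH (ltnW hj)) => z [hxz hzy].
have : d z y = (d x y - j.+1).+1 by lia.
case/d_step => c hzc hcy; exists c; split => //.
have h1 := d_tri x z c; have h2 := d_tri x c y; have := d_edge hzc; lia.
Qed.

End Dist.

Definition Wn (q n : nat) := \sum_(i < n) q ^ i.

Lemma WnS q n : Wn q n.+1 = Wn q n + q ^ n.
Proof. by rewrite /Wn big_ord_recr. Qed.

Lemma WnSl q n : Wn q n.+1 = 1 + q * Wn q n.
Proof.
rewrite /Wn big_ord_recl expn0 big_distrr /=; congr (_ + _).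
by apply: eq_bigr => i _; rewrite expnS.
Qed.

Lemma Wn_mono q m n : m <= n -> Wn q m <= Wn q n.
Proof.
move=> /subnKC <-; elim: (n - m) => [|i IH]; first by rewrite addn0.
by rewrite addnS WnS; apply: leq_trans IH (leq_addr _ _).
Qed.

Lemma Wn_geo q n : 0 < q -> 1 + (q - 1) * Wn q n = q ^ n.
Proof.
move=> hq; elim: n => [|n IH]; first by rewrite /Wn big_ord0 muln0.
rewrite WnS expnS -IH; nia.
Qed.

Section Count.
Variables (T : finType) (e : rel T).
Hypothesis esym : symmetric e.
Hypothesis econn : forall x y, connect e x y.
Variable q : nat.
Hypothesis degq : forall x, #|[set y | e x y]| <= q.+1.

Local Notation d := (dist e).
Definition lev (b a : T) j := [set y | (d a y == j) && (d b y == j.+1)].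
Definition Br (b a : T) n := [set y | (d a y < n) && (d b y == (d a y).+1)].
Definition ball n x := [set y | d x y <= n].
Definition Nb x := [set y | e x y].

Lemma lev_card a b j : e a b -> #|lev b a j| <= q ^ j.
Proof.
move=> hab; elim: j => [|j IH].
  rewrite expn0 -(cards1 a); apply: subset_leq_card; apply/subsetP => y.
  by rewrite !inE => /andP [/eqP /(d_eq0 econn) -> _].
have hsub : lev b a j.+1 \subset \bigcup_(c in lev b a j) (Nb c :&: lev b a j.+1).
  apply/subsetP => y hy; have hy' := hy; rewrite inE in hy'.
  case/andP: hy' => /eqP hay /eqP hby.
  have : d y a = j.+1 by rewrite (d_sym esym econn).
  case/(d_step esym econn) => c hyc hca.
  apply/bigcupP; exists c; last by rewrite inE hy andbT inE esym.
  rewrite inE (d_sym esym econn) hca eqxx /=.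
  have h1 := d_tri econn b a c; have h2 := d_tri econn b c y.
  have h3 := d_edge econn hab; have h4 := d_edge econn hyc.
  rewrite (d_sym esym econn c y) in h2; rewrite (d_sym esym econn a c) hca in h1.
  rewrite (d_sym esym econn a b) in h3; apply/eqP; move: h1 h2 h3 h4; rewrite hby; lia.
apply: leq_trans (subset_leq_card hsub) _.
apply: leq_trans (card_bigcup_leq _ _) _.
apply: (@leq_trans (\sum_(c in lev b a j) q)).
  apply: leq_sum => c hc; rewrite inE in hc; case/andP: hc => /eqP hac /eqP hbc.
  have [w hw hwn] : exists2 w, w \in Nb c & w \notin lev b a j.+1.
    clear hsub; case: j IH hac hbc => [|j] _ hac hbc.
      have := d_eq0 econn hac => <-.
      exists b; first by rewrite inE.
      by rewrite inE (d_refl econn) andbF.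
    have : d c a = j.+1 by rewrite (d_sym esym econn).
    case/(d_step esym econn) => w hcw hwa.
    exists w; first by rewrite inE.
    rewrite inE (d_sym esym econn) hwa; apply/negP => /andP [/eqP h _]; lia.
  apply: (@leq_trans #|Nb c :\ w|).
    apply: subset_leq_card; apply/subsetP => y; rewrite !inE => /andP [hy1 hy2].
    rewrite hy1 andbT; apply/negP => /eqP hyw; move: hwn; rewrite -hyw.
    by rewrite inE hy2.
  have := cardsD1 w (Nb c); rewrite hw add1n => hc.
  have := degq c; rewrite -/(Nb c) hc; lia.
rewrite sum_nat_const expnS mulnC; exact: leq_mul.
Qed.

Lemma range_card a b lo n : e a b -> lo <= n ->
  #|[set y in Br b a n | lo <= d a y]| + Wn q lo <= Wn q n.
Proof.
move=> hab /subnKC <-; elim: (n - lo) => [|i IH].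
  rewrite addn0 -{2}[Wn q lo]add0n leq_add2r leqn0 cards_eq0; apply/eqP/setP => y.
  by rewrite !inE; apply/negP => /andP [/andP [h1 _] h2]; lia.
rewrite addnS WnS.
have hsub : [set y in Br b a (lo + i).+1 | lo <= d a y] \subset
    [set y in Br b a (lo + i) | lo <= d a y] :|: lev b a (lo + i).
  apply/subsetP => y; rewrite !inE => /andP [/andP [h1 /eqP h2] h3].
  rewrite h3 h2 eqxx !andbT /=.
  case: (ltngtP (d a y) (lo + i)) => //; lia.
apply: leq_trans (leq_add (subset_leq_card hsub) (leqnn _)) _.
apply: leq_trans (leq_add (leq_card_setU _ _) (leqnn _)) _.
have := lev_card (lo + i) hab; lia.
Qed.

End Count.

Section Tree.
Variables (T : finType) (e : rel T).
Hypothesis esym : symmetric e.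
Hypothesis econn : forall x y, connect e x y.
Variable q : nat.
Hypothesis q1 : 0 < q.
Hypothesis degq : forall x, #|[set y | e x y]| <= q.+1.

Local Notation d := (dist e).
Let dS := d_sym esym econn.
Let dT := d_tri econn.
Let dE := d_edge econn.
Let eS x y : e x y -> e y x. Proof. by rewrite esym. Qed.

Definition E s t := Wn q s.+1 + Wn q s - Wn q (s - t).

Lemma sum_card_le (I : finType) (P : pred I) (F : I -> nat) K :
  (forall i, P i -> F i <= K) -> \sum_(i | P i) F i <= #|P| * K.
Proof.
move=> h; apply: (@leq_trans (\sum_(i | P i) K)); first exact: leq_sum.
by rewrite sum_nat_const.
Qed.



Lemma BL s t : forall a b z n, e a b -> d a z = t -> d b z = t.+1 -> t + s < n ->
   #|Br e b a n :\: ball e s z| + E s t <= Wn q n.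
Proof.
elim: t => [|t IH] a b z n hab haz hbz htn.
  have hza : z = a by symmetry; apply: (d_eq0 econn).
  subst z; rewrite /E subn0 addnK.
  apply: leq_trans (range_card esym econn degq (lo := s.+1) hab htn).
  rewrite leq_add2r; apply: subset_leq_card; apply/subsetP => y.
  by rewrite !inE -ltnNge => /and3P [-> -> ->].
case: n htn => [|n] htn; first by [].
have : d a z = t.+1 by [].
case/(d_step esym econn) => c hac hcz.
have hcb : c != b by apply/negP => /eqP hcb; move: hbz; rewrite -hcb hcz; lia.
have IHc := IH c a z n (eS hac) hcz haz ltac:(lia).
have hsub : Br e b a n.+1 :\: ball e s z \subset
   ([set a] :\: ball e s z) :|: \bigcup_(c0 in Nb e a :\ b) (Br e a c0 n :\: ball e s z).
  apply/subsetP => y; rewrite !inE => /andP [hyz /andP [hay /eqP hby]].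
  case: (eqVneq y a) => [hya|hya]; first by rewrite hyz.
  rewrite andbF /=.
  have hne : d a y <> 0 by move=> h0; move: hya; rewrite (d_eq0 econn h0) eqxx.
  have : d a y = (d a y).-1.+1 by lia.
  case/(d_step esym econn) => c0 hac0 hc0y.
  apply/bigcupP; exists c0.
    rewrite !inE hac0 andbT; apply/negP => /eqP hc0b; move: hby; rewrite -hc0b hc0y.
    move=> h; lia.
  rewrite !inE hyz hc0y /=; apply/andP; split; first lia.
  by apply/eqP; lia.
have h0 := subset_leq_card hsub.
have h1 := cardsU ([set a] :\: ball e s z) (\bigcup_(c0 in Nb e a :\ b) (Br e a c0 n :\: ball e s z)).
have h2 := card_bigcup_leq (fun c0 => c0 \in Nb e a :\ b) (fun c0 => Br e a c0 n :\: ball e s z).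
have hcin : c \in Nb e a :\ b by rewrite !inE hcb hac.
rewrite [X in _ <= X](bigD1 c hcin) /= in h2.
set X := #|Br e a c n :\: ball e s z| in IHc *.
set S := \sum_(i | _ && (i != c)) _ in h2.
have hS : S <= #|Nb e a :\ b :\ c| * (Wn q n - Wn q (s - t.+1)).
  rewrite /S; apply: (@leq_trans (\sum_(i | (i \in Nb e a :\ b) && (i != c)) (Wn q n - Wn q (s - t.+1)))).
    apply: leq_sum => c0 /andP [hc0 hc0c].
    have hc0' : c0 \in Nb e a :\ b := hc0.
    have hac0 : e a c0 by move: hc0'; rewrite !inE => /andP [].
    rewrite leq_subRL; last by apply: Wn_mono; lia.
    rewrite addnC; apply: leq_trans (range_card esym econn degq (lo := s - t.+1) (eS hac0) _).
      rewrite leq_add2r; apply: subset_leq_card; apply/subsetP => y.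
      rewrite !inE -ltnNge => /andP [hyz /andP [hy1 hy2]]; rewrite hy1 hy2 /=.
      have k1 := dT z a y; have k2 := dT a c0 y; have k3 := dE hac0.
      rewrite (dS z a) haz in k1; lia.
    lia.
  rewrite sum_nat_const; apply: leq_mul => //.
  apply: subset_leq_card; apply/subsetP => c0; rewrite !inE.
  by rewrite unfold_in !inE => /andP [/andP [k1 k2] k3]; rewrite k1 k2 k3.
have hcard : #|Nb e a :\ b :\ c| + 2 <= q.+1.
  have := cardsD1 b (Nb e a); have := cardsD1 c (Nb e a :\ b).
  rewrite hcin !inE hab /=; have := degq a; rewrite -/(Nb e a); lia.
have hsing : #|[set a] :\: ball e s z| <= (s < t.+1).
  case: (ltnP s t.+1) => hst.
    by apply: (@leq_trans #|[set a]|); [apply: subset_leq_card; apply: subsetDl | rewrite cards1].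
  rewrite leqn0 cards_eq0; apply/eqP/setP => y; rewrite !inE.
  apply/negP => /andP [h /eqP hy]; move: h; rewrite hy dS haz; lia.
have hW := WnSl q n.
have hwle : Wn q (s - t.+1) <= Wn q n by apply: Wn_mono; lia.
have hm := leq_mul (leqnn (q - 1)) hwle.
rewrite /E in IHc *.
case: (ltnP s t.+1) => hst.
  have e1 : s - t.+1 = 0 by lia.
  have e2 : s - t = 0 by lia.
  rewrite e1 e2 in IHc hS hwle hm *.
  have hSS : S <= (q - 1) * (Wn q n - Wn q 0).
    apply: leq_trans hS _; apply: leq_mul => //; lia.
  rewrite /Wn big_ord0 subn0 in hSS *; rewrite /Wn big_ord0 in IHc.
  move: hsing; rewrite hst => hsing.
  move: IHc hSS hsing hW; rewrite /Wn; nia.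
have e1 : s - t = (s - t.+1).+1 by lia.
rewrite e1 (WnS q (s - t.+1)) in IHc.
have hg := Wn_geo (s - t.+1) q1.
have hss : Wn q (s - t.+1).+1 <= Wn q s by apply: Wn_mono; lia.
rewrite WnS in hss.
have hSS : S <= (q - 1) * (Wn q n - Wn q (s - t.+1)).
  apply: leq_trans hS _; apply: leq_mul => //; lia.
have hmb : (q - 1) * (Wn q n - Wn q (s - t.+1)) = (q - 1) * Wn q n - (q - 1) * Wn q (s - t.+1).
  by rewrite mulnBr.
move: hsing; rewrite ltnNge hst /= => hsing.
rewrite -/X in h2.
have hq : q * Wn q n = (q - 1) * Wn q n + Wn q n.
  by rewrite mulnBl mul1n subnK // leq_pmull.
lia.
Qed.

Lemma Br_card a b n : e a b -> #|Br e b a n| <= Wn q n.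
Proof.
move=> hab; have := range_card esym econn degq (lo := 0) hab (leq0n n).
rewrite /Wn big_ord0 addn0 => h; apply: leq_trans h.
by apply: subset_leq_card; apply/subsetP => y; rewrite !inE => ->.
Qed.

Lemma ML s k x z : s < d x z -> d x z + s <= k ->
  #|ball e k x :\: ball e s z| + q.+1 * Wn q s <= q.+1 * Wn q k.
Proof.
move=> hs hk.
have : d x z = (d x z).-1.+1 by lia.
case/(d_step esym econn) => c hxc hcz.
have hBL := @BL s (d x z).-1 c x z k (eS hxc) hcz ltac:(lia) ltac:(lia).
rewrite /E in hBL.
have e0 : s - (d x z).-1 = 0 by lia.
rewrite e0 /Wn big_ord0 subn0 -/(Wn q s.+1) -/(Wn q k) WnSl in hBL.
have hsub : ball e k x :\: ball e s z \subset
   [set x] :|: \bigcup_(c0 in Nb e x) (Br e x c0 k :\: ball e s z).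
  apply/subsetP => y; rewrite !inE => /andP [hyz hxy].
  case: (eqVneq y x) => [hyx|hyx] //=.
  have hne : d x y <> 0 by move=> h0; move: hyx; rewrite (d_eq0 econn h0) eqxx.
  have : d x y = (d x y).-1.+1 by lia.
  case/(d_step esym econn) => c0 hxc0 hc0y.
  apply/bigcupP; exists c0; first by rewrite inE.
  rewrite !inE hyz hc0y /=; apply/andP; split; first lia.
  by apply/eqP; lia.
have h0 := subset_leq_card hsub.
have h1 := cardsU [set x] (\bigcup_(c0 in Nb e x) (Br e x c0 k :\: ball e s z)).
have hcin : c \in Nb e x by rewrite inE.
have h2 := card_bigcup_leq (fun c0 => c0 \in Nb e x) (fun c0 => Br e x c0 k :\: ball e s z).
rewrite [X in _ <= X](bigD1 c hcin) /= in h2.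
set S := \sum_(i | _ && (i != c)) _ in h2.
have hS : S <= #|Nb e x :\ c| * Wn q k.
  rewrite /S; apply: (@leq_trans (\sum_(i | (i \in Nb e x) && (i != c)) Wn q k)).
    apply: leq_sum => c0 /andP [hc0 hc0c].
    have hc0' : c0 \in Nb e x := hc0.
    have hxc0 : e x c0 by move: hc0'; rewrite !inE.
    apply: leq_trans (Br_card _ (eS hxc0)); apply: subset_leq_card; exact: subsetDl.
  rewrite sum_nat_const; apply: leq_mul => //.
  apply: subset_leq_card; apply/subsetP => c0.
  by rewrite unfold_in !inE => /andP [k1 k2]; rewrite k1 k2.
have hcard : #|Nb e x :\ c| + 1 <= q.+1.
  have := cardsD1 c (Nb e x); rewrite hcin; have := degq x; rewrite -/(Nb e x); lia.
have hm : #|Nb e x :\ c| * Wn q k <= q * Wn q k by apply: leq_mul => //; lia.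
have hs1 : #|[set x]| = 1 by rewrite cards1.
rewrite -/(Wn q s) in hBL.
rewrite !mulSn; lia.
Qed.

End Tree.

Lemma greedy (T : finType) (r : rel T) (c : nat) (S0 : {set T}) (f0 : T -> 'I_c)
  (rho : T -> nat) :
  injective rho -> (forall x y, r x y -> r y x) ->
  (forall x y, x \in S0 -> y \in S0 -> x != y -> r x y -> f0 x != f0 y) ->
  (forall x, x \notin S0 -> forall g : T -> 'I_c, (forall y, y \in S0 -> g y = f0 y) ->
      #|[set g y | y in [set y | (y != x) && r x y && ((y \in S0) || (rho y < rho x))]]| < c) ->
  colorable r c.
Proof.
move=> rinj rsym hf0 hstep.
pose col n y := (y \in S0) || (rho y < n).
have claim : forall n, exists g : T -> 'I_c, (forall y, y \in S0 -> g y = f0 y) /\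
   (forall x y, col n x -> col n y -> x != y -> r x y -> g x != g y).
  elim=> [|n [g [hg0 hg]]].
    exists f0; split => // x y; rewrite /col !orbF; exact: hf0.
  case: (pickP [pred x | (x \notin S0) && (rho x == n)]) => [x /andP [hxS /eqP hxn]|hnone].
    set F := [set g y | y in [set y | (y != x) && r x y && ((y \in S0) || (rho y < rho x))]].
    have hF := hstep x hxS g hg0; rewrite -/F in hF.
    case: (pickP [pred i | i \notin F]) => [i hi|hall]; last first.
      have : c <= #|F|.
        rewrite -{1}(card_ord c); apply: subset_leq_card; apply/subsetP => i _.
        by move: (hall i) => /= /negbFE.
      by rewrite leqNgt hF.
    have hcolS : forall y, col n.+1 y -> y != x -> col n y.
      move=> y; rewrite /col ltnS leq_eqVlt => /orP [->//|/orP [/eqP hyn|->]]; last by rewrite orbT.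
      case: (boolP (y \in S0)) => // hyS; move=> /eqP []; apply: rinj.
      by rewrite hyn hxn.
    exists (fun y => if y == x then i else g y); split.
      move=> y hy; have : y != x by apply: contraNneq hxS => <-.
      by move/negbTE => ->; apply: hg0.
    move=> x1 y1 hx1 hy1 hxy hr.
    case: (eqVneq x1 x) => [ex1|nx1]; case: (eqVneq y1 x) => [ey1|ny1].
    - by move: hxy; rewrite ex1 ey1 eqxx.
    - have hy1' := hcolS _ hy1 ny1.
      apply/negP => /eqP hiy; move: hi; rewrite /= hiy => /negP; apply.
      apply/imsetP; exists y1 => //; rewrite inE ny1 -ex1 hr /=.
      by move: hy1'; rewrite /col ex1 hxn.
    - have hx1' := hcolS _ hx1 nx1.
      apply/negP => /eqP hiy; move: hi; rewrite /= -hiy => /negP; apply.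
      apply/imsetP; exists x1 => //; rewrite inE nx1 -ey1 rsym //=.
      by move: hx1'; rewrite /col ey1 hxn.
    - exact: hg (hcolS _ hx1 nx1) (hcolS _ hy1 ny1) hxy hr.
  exists g; split => // x y hx hy; apply: hg.
    move: hx; rewrite /col ltnS leq_eqVlt => /orP [->//|/orP [/eqP hxn|->]]; last by rewrite orbT.
    by case: (boolP (x \in S0)) => // hxS; have := hnone x; rewrite /= hxS hxn eqxx.
  move: hy; rewrite /col ltnS leq_eqVlt => /orP [->//|/orP [/eqP hyn|->]]; last by rewrite orbT.
  by case: (boolP (y \in S0)) => // hyS; have := hnone y; rewrite /= hyS hyn eqxx.
case: (claim (\max_y rho y).+1) => g [_ hg].
apply/existsP; exists [ffun y => g y]; apply/forallP => x; apply/forallP => y.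
apply/implyP => /andP [hxy hr]; rewrite !ffunE; apply: hg => //.
  by rewrite /col ltnS leq_bigmax orbT.
by rewrite /col ltnS leq_bigmax orbT.
Qed.

Section Main.
Variables (T : finType) (e : rel T).
Hypothesis esym : symmetric e.
Hypothesis econn : forall x y, connect e x y.
Variable q : nat.
Hypothesis q1 : 0 < q.
Hypothesis degq : forall x, #|[set y | e x y]| <= q.+1.

Local Notation d := (dist e).
Let dS := d_sym esym econn.
Let dT := d_tri econn.
Let dR := d_refl econn.

Lemma d_lt x y : d x y < #|T|.
Proof.
case: (within_ex econn x y) => n hn; rewrite withinE // => h.
exact: leq_ltn_trans h hn.
Qed.

Lemma color_far k s u v : 6 * s + 3 <= k -> d u v = k + 2 * s + 1 ->
  colorable (powrel e k) (q.+1 * Wn q k - q.+1 * Wn q s).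
Proof.
move=> hk huv.
have [w [huw hwv]] := d_geo esym econn (x := u) (y := v) (j := 4 * s + 2) ltac:(lia).
rewrite huv in hwv.
set M := q.+1 * Wn q k; set m := q.+1 * Wn q s.
set A := ball e s u; set B := ball e s v; set S0 := A :|: B.
pose mx := maxn #|A| #|B|.
have hmid : forall x, d w x <= s -> #|ball e k x :\: S0| + mx + m <= M.
  move=> x hx.
  have hxu1 := dT w x u; have hxu2 := dT u w x.
  have hxv1 := dT w x v; have hxv2 := dT v w x.
  rewrite (dS w u) huw (dS x u) in hxu1 *; rewrite (dS v w) hwv in hxv2.
  rewrite (dS x v) in hxv1.
  have hA := ML esym econn q1 degq (s := s) (k := k) (x := x) (z := u)
    ltac:(rewrite dS; lia) ltac:(rewrite dS; lia).
  have hB := ML esym econn q1 degq (s := s) (k := k) (x := x) (z := v)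
    ltac:(rewrite dS; lia) ltac:(rewrite dS; lia).
  have eA : #|ball e k x :\: A| = #|ball e k x :\: S0| + #|B|.
    rewrite -(cardsID B (ball e k x :\: A)) addnC; congr (_ + _).
      by rewrite /S0 setDDl.
    have -> : (ball e k x :\: A) :&: B = B; last by [].
    apply/setIidPr/subsetP => y; rewrite !inE => hy.
    have k1 := dT x v y; have k2 := dT u y v; rewrite (dS y v) in k2.
    rewrite (dS x v) in k1; rewrite huv in k2.
    by apply/andP; split; [rewrite -ltnNge|]; lia.
  have eB : #|ball e k x :\: B| = #|ball e k x :\: S0| + #|A|.
    rewrite -(cardsID A (ball e k x :\: B)) addnC; congr (_ + _).
      by rewrite /S0 setDDl setUC.
    have -> : (ball e k x :\: B) :&: A = A; last by [].
    apply/setIidPr/subsetP => y; rewrite !inE => hy.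
    have k1 := dT x u y; have k2 := dT v y u; rewrite (dS y u) (dS v u) huv in k2.
    rewrite (dS x u) in k1.
    by apply/andP; split; [rewrite -ltnNge|]; lia.
  rewrite -/A -/m -/M in hA; rewrite -/B -/m -/M in hB.
  suff : mx <= M - m - #|ball e k x :\: S0| by lia.
  rewrite /mx geq_max; apply/andP; split; lia.
have hwin : w \in ball e k w :\: S0.
  have hvw : d v w = k + 2 * s + 1 - (4 * s + 2) by rewrite dS.
  rewrite !inE dR; apply/andP; split; [|lia].
  by apply/norP; split; rewrite -ltnNge; lia.
have hw1 : 0 < #|ball e k w :\: S0| by apply/card_gt0P; exists w.
have hmw := hmid w ltac:(rewrite dR; lia).
case hc : (M - m) => [|c]; first by lia.
pose f0 (y : T) : 'I_c.+1 :=
  if y \in A then inord (index y (enum A)) else inord (index y (enum B)).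
have hidx : forall (X : {set T}) y, y \in X -> index y (enum X) < #|X|.
  by move=> X y hy; rewrite cardE index_mem mem_enum.
have hidxinj : forall (X : {set T}) y1 y2, y1 \in X -> y2 \in X ->
    index y1 (enum X) = index y2 (enum X) -> y1 = y2.
  move=> X y1 y2 h1 h2 hi.
  have e1 : nth y1 (enum X) (index y1 (enum X)) = y1 by apply: nth_index; rewrite mem_enum.
  have e2 : nth y1 (enum X) (index y2 (enum X)) = y2 by apply: nth_index; rewrite mem_enum.
  by rewrite -{1}e1 hi e2.
have hAB : forall y, y \in A -> y \notin B.
  move=> y; rewrite !inE => h1; rewrite -ltnNge.
  have := dT u y v; rewrite huv (dS y v); lia.
have hmxc : mx < c.+1 by lia.
have hf0 : forall y, y \in S0 -> (f0 y : nat) < mx.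
  move=> y hy; rewrite /f0; case: ifP => hyA.
    have := hidx _ _ hyA; have := leq_maxl #|A| #|B|; rewrite -/mx => h1 h2.
    rewrite inordK; lia.
  have hyB : y \in B by move: hy; rewrite inE hyA.
  have := hidx _ _ hyB; have := leq_maxr #|A| #|B|; rewrite -/mx => h1 h2.
  rewrite inordK; lia.
have hinj : forall (X : {set T}) y1 y2, y1 \in X -> y2 \in X -> #|X| <= mx ->
    (inord (index y1 (enum X)) : 'I_c.+1) = inord (index y2 (enum X)) -> y1 = y2.
  move=> X y1 y2 h1 h2 hX /(congr1 val) /=.
  have := hidx _ _ h1; have := hidx _ _ h2 => k1 k2.
  rewrite !inordK; [|lia|lia]; exact: hidxinj.
have hprop : forall x y, x \in S0 -> y \in S0 -> x != y -> powrel e k x y -> f0 x != f0 y.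
  move=> x y hx hy hxy /andP [_]; rewrite withinE // => hd.
  have hfar : forall a b, a \in A -> b \in B -> d a b <= k -> False.
    move=> a b; rewrite !inE => ha hb hab.
    have := dT u a v; have := dT a b v; rewrite huv (dS b v); lia.
  rewrite /f0; case: ifP => hxA; case: ifP => hyA.
  - by apply/negP => /eqP /(hinj _ _ _ hxA hyA (leq_maxl _ _)) /eqP; rewrite (negbTE hxy).
  - have hyB : y \in B by move: hy; rewrite inE hyA.
    by case: (hfar _ _ hxA hyB hd).
  - have hxB : x \in B by move: hx; rewrite inE hxA.
    by case: (hfar _ _ hyA hxB); rewrite dS.
  - have hxB : x \in B by move: hx; rewrite inE hxA.
    have hyB : y \in B by move: hy; rewrite inE hyA.
    by apply/negP => /eqP /(hinj _ _ _ hxB hyB (leq_maxr _ _)) /eqP; rewrite (negbTE hxy).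
pose rho (y : T) := (#|T| - d w y) * #|T| + enum_rank y.
have hrinj : injective rho.
  move=> y1 y2 /(congr1 (modn^~ #|T|)); rewrite /rho !modnMDl !modn_small; try exact: ltn_ord.
  by move/ord_inj/enum_rank_inj.
have hrmono : forall x y, d w y < d w x -> rho x < rho y.
  move=> x y hxy; rewrite /rho.
  have h1 : (enum_rank x : nat) < #|T| by case: (enum_rank x).
  have h2 := d_lt w x.
  have : (#|T| - d w x).+1 <= #|T| - d w y by lia.
  move=> h3; apply: (@leq_trans ((#|T| - d w x).+1 * #|T|)); first by rewrite mulSn; lia.
  by apply: leq_trans (leq_addr _ _); apply: leq_mul.
apply: (greedy (S0 := S0) (f0 := f0) hrinj) => //.
  move=> x y /andP [hxy hw]; rewrite /powrel eq_sym hxy /=; exact: within_sym.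
move=> x hxS g hg.
have hdx : forall y, powrel e k x y -> d x y <= k.
  by move=> y /andP [_]; rewrite withinE.
have hxS' : (x \in A) = false /\ (x \in B) = false.
  by move: hxS; rewrite inE negb_or => /andP [/negbTE -> /negbTE ->].
case: (leqP (d w x) s) => hx.
  have hsub : [set g y | y : T & (y != x) && powrel e k x y && ((y \in S0) || (rho y < rho x))]
      \subset g @: ((ball e k x :\: S0) :\ x) :|: [set (inord (nat_of_ord j) : 'I_c.+1) | j : 'I_mx].
    apply/subsetP => i /imsetP [y]; rewrite inE => /andP [/andP [hyx hxy] _] ->.
    case: (boolP (y \in S0)) => hyS.
      apply/setUP; right; apply/imsetP; exists (Ordinal (hf0 y hyS)) => //=.
      by rewrite hg // inord_val.
    apply/setUP; left; apply: imset_f.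
    by rewrite in_setD1 hyx in_setD hyS inE hdx.
  have h0 := subset_leq_card hsub.
  have h5 := cardsU (g @: ((ball e k x :\: S0) :\ x)) [set (inord (nat_of_ord j) : 'I_c.+1) | j : 'I_mx].
  have h1 := leq_imset_card g ((ball e k x :\: S0) :\ x).
  have h2 : #|[set (inord (nat_of_ord j) : 'I_c.+1) | j : 'I_mx]| <= mx.
    by apply: leq_trans (leq_imset_card _ _) _; rewrite card_ord.
  have hxin : x \in ball e k x :\: S0 by rewrite in_setD hxS inE dR.
  have h3 := cardsD1 x (ball e k x :\: S0); rewrite hxin in h3.
  have h4 := hmid x hx.
  move: h3; rewrite /= => h3.
  apply: leq_ltn_trans h0 _; lia.
have [z [hz1 hz2 hz3]] : exists z, [/\ s < d x z, d x z + s <= k &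
    forall y, d z y <= s -> (y \notin S0) && (d w y < d w x)].
  have hxw : d x w = d w x by rewrite dS.
  have hvw : d v w = d w v by rewrite dS.
  case: (leqP (d w x) (k + s)) => hxk.
    have [z [hxz hzw]] := d_geo esym econn (x := x) (y := w) (j := minn (d w x) (k - s)) ltac:(lia).
    exists z; split; [lia|lia|] => y hzy.
    have k1 := dT w z y; have k2 := dT u y w; have k3 := dT y z w; have k4 := dT v y w.
    have s1 := dS w z; have s2 := dS y z; have s3 := dS u w.
    rewrite !inE negb_or -!ltnNge; apply/andP; split; [apply/andP; split|]; lia.
  have [z [hxz hzw]] := d_geo esym econn (x := x) (y := w) (j := s.+1) ltac:(lia).
  exists z; split; [lia|lia|] => y hzy.
  have k1 := dT w z y; have k5 := dT w u z; have k6 := dT u y z.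
  have k7 := dT w v z; have k8 := dT v y z.
  have s1 := dS w z; have s2 := dS y z; have s3 := dS u w.
  rewrite !inE negb_or -!ltnNge; apply/andP; split; [apply/andP; split|]; lia.
have hsub : [set y : T | (y != x) && powrel e k x y && ((y \in S0) || (rho y < rho x))]
    \subset (ball e k x :\: ball e s z) :\ x.
  apply/subsetP => y; rewrite inE => /andP [/andP [hyx hxy] hor].
  rewrite in_setD1 hyx in_setD !inE hdx // andbT; apply/negP => hzy.
  case/andP: (hz3 y hzy) => hyS hlt.
  move: hor; rewrite (negbTE hyS) /= ltnNge (ltnW (hrmono _ _ hlt)).
  by [].
apply: leq_ltn_trans (leq_imset_card _ _) _.
apply: leq_ltn_trans (subset_leq_card hsub) _.
have hxin : x \in ball e k x :\: ball e s z by rewrite in_setD !inE dR (dS z x) -ltnNge hz1.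
have h3 := cardsD1 x (ball e k x :\: ball e s z); rewrite hxin /= in h3.
have h4 := ML esym econn q1 degq hz1 hz2.
rewrite -/m -/M in h4.
lia.
Qed.



End Main.
Unset Implicit Arguments. Set Strict Implicit.
Import Order.TTheory GRing.Theory Num.Theory.

Theorem proposition3 (T : finType) (e : rel T) (k Delta s : nat) :
  symmetric e -> irreflexive e ->
  (forall x y : T, connect e x y) ->
  maxdeg e = Delta ->
  3 <= k -> 3 <= Delta ->
  12 * s + 5 <= k ->
  (kgap e k < (fmd s Delta + 1)%:Z)%R ->
  diameter e <= k + 2 * s.
Proof.
move=> esym eirr econn hmax hk3 hD3 hs hgap.
pose q := Delta.-1.
have hDq : Delta = q.+1 by rewrite /q; lia.
have q1 : 0 < q by rewrite /q; lia.
have degq : forall x, #|[set y | e x y]| <= q.+1.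
  move=> x; rewrite -hDq -hmax; exact: (leq_bigmax (F := deg e) x).
apply/bigmax_leqP => u _; apply/bigmax_leqP => v _.
rewrite leqNgt; apply/negP => huv.
have [v' [huv' _]] := d_geo esym econn (x := u) (y := v) (j := k + 2 * s + 1) ltac:(lia).
have hcol := color_far esym econn q1 degq (k := k) (s := s) ltac:(lia) huv'.
have hWm : Wn q s <= Wn q k by apply: Wn_mono; lia.
move: hgap; rewrite /kgap /chi; case: ex_minnP => n hn hmin.
have hn' := hmin _ hcol.
rewrite /fmd hmax hDq !subn1 /= -/(Wn q k) -/(Wn q s).
rewrite ltrBlDr -PoszD ltz_nat.
have := leq_mul (leqnn q.+1) hWm.
lia.
Qed.
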